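(* Assume the setting described in the context. Let $P$ be the p-matrix with data $(\mathbf a,\mathbf b,\mathbf c,\mathbf d,E,F,G,H)$ such that $F(\mathbf k)\le\widehat\alpha\mathbf k$ and $H(\boldsymbol\ell)\le\widehat\beta\boldsymbol\ell$ for all $\mathbf k,\boldsymbol\ell$ in the respective blocks, and let $(\boldsymbol\kappa;\boldsymbol\lambda;\sigma)\in\mathcal C$. Then the subset $P(\vartheta)=\{\mathbf p\in P:\mathbf p-(\boldsymbol\kappa;\boldsymbol\lambda;\sigma)\in\mathcal C\}$ (the elements of $P$ divisible by $\vartheta=(\alpha^{\boldsymbol\kappa},\beta^{\boldsymbol\lambda})^{(\sigma)}$) is the p-matrix with data $(\mathbf a',\mathbf b,\mathbf c',\mathbf d,E',F',G',H')$, where (maxima of vectors taken componentwise) $\mathbf a'=\max\{\mathbf a,\boldsymbol\kappa\}$, $\mathbf c'=\max\{\mathbf c,\boldsymbol\lambda\}$, $E'(\mathbf k)=\max\{E(\mathbf k),\sigma\}$, $F'(\mathbf k)=\min\{F(\mathbf k),\widehat\alpha(\mathbf k-\boldsymbol\kappa)+\sigma\}$, $G'(\boldsymbol\ell)=\max\{G(\boldsymbol\ell),\sigma\}$, $H'(\boldsymbol\ell)=\min\{H(\boldsymbol\ell),\widehat\beta(\boldsymbol\ell-\boldsymbol\lambda)+\sigma\}$.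
   Context: $\mathbb N=\{0,1,2,\dots\}$. Fix integers $p,q\ge1$, nonnegative integer weight vectors $\widehat\alpha=(\widehat\alpha_1,\dots,\widehat\alpha_p)$, $\widehat\beta=(\widehat\beta_1,\dots,\widehat\beta_q)$ (the weights of Hilbert bases $\alpha,\beta$ of two algebras of $\mathfrak{sl}_2$-seminvariants), and write $\widehat\alpha\mathbf k=\sum\widehat\alpha_ik_i$, $\widehat\beta\boldsymbol\ell=\sum\widehat\beta_j\ell_j$. The transvectant cone is $\mathcal C=\{(\mathbf k;\boldsymbol\ell;s)\in\mathbb N^{p+q+1}:s\le\widehat\alpha\mathbf k,\ s\le\widehat\beta\boldsymbol\ell\}$; $(\mathbf k;\boldsymbol\ell;s)$ represents the transvectant $(\alpha^{\mathbf k},\beta^{\boldsymbol\ell})^{(s)}$. Nonnegative integer intervals: for $a\in\mathbb Z$, $b\in\mathbb Z\cup\{\infty\}$, $[a,b]=\{j\in\mathbb N:a\le j\le b\}$ (with $j<\infty$ if $b=\infty$); negative endpoints are allowed. For vectors, the block $[\mathbf a,\mathbf b]=[a_1,b_1]\times\cdots\times[a_p,b_p]$. A p-matrix with data $(\mathbf a,\mathbf b,\mathbf c,\mathbf d,E,F,G,H)$, where $\mathbf a\in\mathbb Z^p$, $\mathbf b\in(\mathbb Z\cup\{\infty\})^p$, $\mathbf c\in\mathbb Z^q$, $\mathbf d\in(\mathbb Z\cup\{\infty\})^q$, $E,F$ integer-valued functions on $[\mathbf a,\mathbf b]$ and $G,H$ integer-valued functions on $[\mathbf c,\mathbf d]$,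 denotes the set $\{(\mathbf k;\boldsymbol\ell;s)\in\mathbb N^{p+q+1}:\mathbf k\in[\mathbf a,\mathbf b],\ \boldsymbol\ell\in[\mathbf c,\mathbf d],\ s\in[E(\mathbf k),F(\mathbf k)]\cap[G(\boldsymbol\ell),H(\boldsymbol\ell)]\}$. *)

(* Defs.v *)
From mathcomp Require Import all_boot all_order all_algebra.
Set Implicit Arguments. Unset Strict Implicit. Unset Printing Implicit Defensive.
Import Order.TTheory GRing.Theory Num.Theory.
Local Open Scope ring_scope.

(* Vectors in N^p are functions 'I_p -> nat; integer endpoints are 'int';
   an upper endpoint in Z ∪ {oo} is an 'option int', with None = oo. *)

Definition inInt (a : int) (b : option int) (j : nat) : Prop :=
  a <= j%:Z /\ (match b with None => True | Some b' => j%:Z <= b' end).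

Definition inBlock (n : nat) (a : 'I_n -> int) (b : 'I_n -> option int)
  (k : 'I_n -> nat) : Prop := forall i, inInt (a i) (b i) (k i).

Definition wsum (n : nat) (w k : 'I_n -> nat) : nat := (\sum_(i < n) w i * k i)%N.

Definition inCone (p q : nat) (alpha : 'I_p -> nat) (beta : 'I_q -> nat)
  (k : 'I_p -> nat) (l : 'I_q -> nat) (s : nat) : Prop :=
  (s <= wsum alpha k)%N /\ (s <= wsum beta l)%N.

(* membership in the p-matrix with data (a,b,c,d,E,F,G,H).
   E F G H are total functions; only their values on the blocks matter. *)
Definition inPmatrix (p q : nat)
  (a : 'I_p -> int) (b : 'I_p -> option int)
  (c : 'I_q -> int) (d : 'I_q -> option int)
  (E F : ('I_p -> nat) -> int) (G H : ('I_q -> nat) -> int)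
  (k : 'I_p -> nat) (l : 'I_q -> nat) (s : nat) : Prop :=
  inBlock a b k /\ inBlock c d l /\
  (E k <= s%:Z /\ s%:Z <= F k) /\ (G l <= s%:Z /\ s%:Z <= H l).

(* (k;l;s) - (kappa;lambda;sigma) ∈ C  (the difference, computed in Z^{p+q+1},
   is an element of C) *)
Definition divisibleBy (p q : nat) (alpha : 'I_p -> nat) (beta : 'I_q -> nat)
  (kappa : 'I_p -> nat) (lambda : 'I_q -> nat) (sigma : nat)
  (k : 'I_p -> nat) (l : 'I_q -> nat) (s : nat) : Prop :=
  exists (k0 : 'I_p -> nat) (l0 : 'I_q -> nat) (s0 : nat),
    [/\ inCone alpha beta k0 l0 s0,
        forall i, k i = (k0 i + kappa i)%N,
        forall j, l j = (l0 j + lambda j)%N &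
        s = (s0 + sigma)%N].

(* Main.v *)
Require Import Defs.
From mathcomp Require Import all_boot all_order all_algebra.
From mathcomp Require Import zify.
Import Order.TTheory GRing.Theory Num.Theory.
Local Open Scope ring_scope.

Lemma wsum_int n (w k0 kap k : 'I_n -> nat) :
  (forall i, k i = k0 i + kap i)%N ->
  \sum_(i < n) (w i)%:Z * ((k i)%:Z - (kap i)%:Z) = (wsum w k0)%:Z.
Proof.
move=> hk; rewrite /wsum -natz natr_sum; apply: eq_bigr => i _.
by rewrite hk PoszD addrK natz PoszM.
Qed.

Theorem theorem14p1 (p q : nat) (hp : (0 < p)%N) (hq : (0 < q)%N)
  (alpha : 'I_p -> nat) (beta : 'I_q -> nat)
  (a : 'I_p -> int) (b : 'I_p -> option int)
  (c : 'I_q -> int) (d : 'I_q -> option int)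
  (E F : ('I_p -> nat) -> int) (G H : ('I_q -> nat) -> int)
  (hF : forall k, inBlock a b k -> F k <= (wsum alpha k)%:Z)
  (hH : forall l, inBlock c d l -> H l <= (wsum beta l)%:Z)
  (kappa : 'I_p -> nat) (lambda : 'I_q -> nat) (sigma : nat)
  (hcone : inCone alpha beta kappa lambda sigma) :
  forall (k : 'I_p -> nat) (l : 'I_q -> nat) (s : nat),
    inPmatrix
      (fun i => Num.max (a i) (kappa i)%:Z) b
      (fun j => Num.max (c j) (lambda j)%:Z) d
      (fun k' => Num.max (E k') sigma%:Z)
      (fun k' => Num.min (F k')
         (\sum_(i < p) (alpha i)%:Z * ((k' i)%:Z - (kappa i)%:Z) + sigma%:Z))
      (fun l' => Num.max (G l') sigma%:Z)
      (fun l' => Num.min (H l')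
         (\sum_(j < q) (beta j)%:Z * ((l' j)%:Z - (lambda j)%:Z) + sigma%:Z))
      k l s
    <->
    (inPmatrix a b c d E F G H k l s /\
     divisibleBy alpha beta kappa lambda sigma k l s).
Proof.
move=> k l s; split.
- case=> hk [hl [[hE hF'] [hG hH']]].
  move: hE hF' hG hH'; rewrite !ge_max !le_min => /andP[hE hs1] /andP[hF1 hF2]
    /andP[hG hs2] /andP[hH1 hH2].
  have hkk i : (kappa i <= k i)%N.
    by case: (hk i); rewrite ge_max => /andP[_ h] _; move: h; rewrite lez_nat.
  have hll j : (lambda j <= l j)%N.
    by case: (hl j); rewrite ge_max => /andP[_ h] _; move: h; rewrite lez_nat.
  have hs : (sigma <= s)%N by move: hs1; rewrite lez_nat.
  split.
    split; [move=> i; case: (hk i); rewrite ge_max => /andP[h _] h2; by split|].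
    split; [move=> j; case: (hl j); rewrite ge_max => /andP[h _] h2; by split|].
    by rewrite hE hF1 hG hH1.
  exists (fun i => k i - kappa i)%N, (fun j => l j - lambda j)%N, (s - sigma)%N.
  have ek i : k i = (k i - kappa i + kappa i)%N by rewrite subnK.
  have el j : l j = (l j - lambda j + lambda j)%N by rewrite subnK.
  split => //; last by rewrite subnK.
  move: hF2 hH2; rewrite (@wsum_int _ alpha _ _ _ ek) (@wsum_int _ beta _ _ _ el) => h1 h2.
  move: h1 h2; rewrite -!PoszD !lez_nat => h1 h2.
  split; lia.
- case=> [[hk [hl [[hE hF'] [hG hH']]]] [k0 [l0 [s0 [[hc1 hc2] ek el es]]]]].
  split.
    move=> i; case: (hk i) => h1 h2; split => //.
    by rewrite ge_max h1 /= ek lez_nat leq_addl.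
  split.
    move=> j; case: (hl j) => h1 h2; split => //.
    by rewrite ge_max h1 /= el lez_nat leq_addl.
  rewrite !ge_max !le_min hE hF' hG hH' (@wsum_int _ alpha _ _ _ ek) (@wsum_int _ beta _ _ _ el) es /=.
  idtac.
  rewrite -!PoszD !lez_nat.
  split; split; lia.
Qed.
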